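(* Let $n\geq2$, $m\geq1$ be integers, $\alpha,\beta\in\mathbb{C}$, $1\leq k\leq n/2$, and assume $|\beta-\alpha|>\cos\phi_k$. Then $$\big(\widetilde D_k\cap B_{\cos\phi_k}(0)\big)\cup\big(\widetilde E_k\cap R_{|\beta-\alpha|,k}\cap X\big)=B_{\cos\phi_k}(0)\cup\big(\widetilde E_k\cap R_{|\beta-\alpha|,k}\cap X\big),$$ where $X=\mathbb{C}$ if $k\leq m$ and $X=B_{\cos\psi_{k,m}}(0)$ if $k>m$. Moreover, each of the two lines $\{x+iy:\ x\cos\delta_k+y\sin\delta_k=|\beta-\alpha|\cos\delta_k\}$ and $\{x+iy:\ x\cos\delta_k-y\sin\delta_k=|\beta-\alpha|\cos\delta_k\}$ is tangent to the circle $x^2+y^2=\cos^2\phi_k$.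
   Context: $\phi_k=\frac{k\pi}{n+1}$, $\psi_{k,m}=\frac{(k-m)\pi}{n+1}$. $D_k=\{\theta\in\mathbb{R}:\ |\beta-\alpha|\cos\theta\leq\cos\phi_k\}$. $\delta_k=\arccos(\cos\phi_k/|\beta-\alpha|)\in[0,\pi]$ if $\beta\neq\alpha$ and $|\beta-\alpha|\geq|\cos\phi_k|$, and $\delta_k=0$ otherwise. $\widetilde D_k=\{\mu\in\mathbb{C}:\ \arg\mu\in D_k\}$ and $\widetilde E_k=\{\mu\in\mathbb{C}:\ \arg\mu\notin D_k\}$. $B_r(\lambda)$ is the closed disk of radius $r$ centered at $\lambda$. For $r\geq0$, $R_{r,k}=\{x+iy:\ x\leq r,\ (x-r)\cot\delta_k\leq y\leq(r-x)\cot\delta_k\}$. *)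

(* Defs.v *)
From Stdlib Require Import Reals ClassicalEpsilon.
From Coquelicot Require Import Coquelicot.
Open Scope R_scope.

Definition phi (n k : nat) : R := INR k * PI / INR (n + 1).
Definition psi (n k m : nat) : R := (INR k - INR m) * PI / INR (n + 1).

Definition Dk (n k : nat) (alpha beta : C) (theta : R) : Prop :=
  Cmod (beta - alpha)%C * cos theta <= cos (phi n k).

Definition delta (n k : nat) (alpha beta : C) : R :=
  if excluded_middle_informative
       (beta <> alpha /\ Cmod (beta - alpha)%C >= Rabs (cos (phi n k)))
  then acos (cos (phi n k) / Cmod (beta - alpha)%C)
  else 0.

(* principal argument in (-pi, pi]; convention arg 0 = 0 *)
Definition Carg (z : C) : R :=
  if excluded_middle_informative (z = 0%C) then 0
  else if Rle_dec 0 (Im z) then acos (Re z / Cmod z)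
  else - acos (Re z / Cmod z).

Definition tDk (n k : nat) (alpha beta : C) (mu : C) : Prop :=
  Dk n k alpha beta (Carg mu).
Definition tEk (n k : nat) (alpha beta : C) (mu : C) : Prop :=
  ~ Dk n k alpha beta (Carg mu).

Definition Ball (r : R) (lambda : C) (mu : C) : Prop :=
  Cmod (mu - lambda)%C <= r.

Definition Rregion (n k : nat) (alpha beta : C) (r : R) (mu : C) : Prop :=
  let d := delta n k alpha beta in
  let x := Re mu in let y := Im mu in
  x <= r /\ (x - r) * (cos d / sin d) <= y /\ y <= (r - x) * (cos d / sin d).

Definition Xset (n k m : nat) (mu : C) : Prop :=
  if Nat.leb k m then True else Ball (cos (psi n k m)) 0%C mu.

Definition tangent (L S : C -> Prop) : Prop :=
  exists! z : C, L z /\ S z.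

(* Main.v *)
Require Import Defs.
From Stdlib Require Import Reals Lra Lia Classical ClassicalEpsilon.
From Coquelicot Require Import Coquelicot.
Open Scope R_scope.

Lemma phi_bounds (n k : nat) : (1 <= k)%nat -> (2 * k <= n)%nat ->
  0 < phi n k < PI / 2.
Proof.
  intros H1 H2. unfold phi.
  assert (Hk : 1 <= INR k) by (apply (le_INR 1); lia).
  assert (Hn : 2 * INR k + 1 <= INR (n + 1)).
  { replace (2 * INR k + 1) with (INR (2 * k + 1)).
    - apply le_INR; lia.
    - rewrite plus_INR, mult_INR; simpl; ring. }
  set (N := INR (n + 1)) in *.
  assert (HN : 0 < N) by lra.
  set (t := / N).
  assert (Ht : 0 < t) by (apply Rinv_0_lt_compat; lra).
  assert (HNt : N * t = 1) by (unfold t; field; lra).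
  pose proof PI_RGT_0.
  assert (HPt : 0 < PI * t) by nra.
  unfold Rdiv. fold t. split; nra.
Qed.

Theorem proposition3p4 (n m k : nat) (alpha beta : C) :
  (2 <= n)%nat -> (1 <= m)%nat -> (1 <= k)%nat -> (2 * k <= n)%nat ->
  Cmod (beta - alpha)%C > cos (phi n k) ->
  (forall mu : C,
     ((tDk n k alpha beta mu /\ Ball (cos (phi n k)) 0%C mu)
      \/ (tEk n k alpha beta mu /\ Rregion n k alpha beta (Cmod (beta - alpha)%C) mu
          /\ Xset n k m mu))
     <->
     (Ball (cos (phi n k)) 0%C mu
      \/ (tEk n k alpha beta mu /\ Rregion n k alpha beta (Cmod (beta - alpha)%C) mu
          /\ Xset n k m mu)))
  /\
  (let d := delta n k alpha beta in
   let r := Cmod (beta - alpha)%C in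
   let circle := fun z : C => Re z ^ 2 + Im z ^ 2 = cos (phi n k) ^ 2 in
   tangent (fun z : C => Re z * cos d + Im z * sin d = r * cos d) circle
   /\ tangent (fun z : C => Re z * cos d - Im z * sin d = r * cos d) circle).
Proof.
  intros Hn Hm Hk1 Hk2 Hr.
  pose proof (phi_bounds n k Hk1 Hk2) as [Hp0 Hp1].
  assert (Hc : 0 < cos (phi n k)) by (apply cos_gt_0; lra).
  set (c := cos (phi n k)) in *.
  set (r := Cmod (beta - alpha)%C) in *.
  assert (Hba : beta <> alpha).
  { intro E. subst beta. unfold r in Hr.
    unfold Cminus in Hr; rewrite Cplus_opp_r in Hr.
    rewrite Cmod_0 in Hr. lra. }
  assert (Hu0 : 0 < c / r) by (apply Rdiv_lt_0_compat; lra).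
  assert (Hu1 : c / r < 1) by (apply (Rmult_lt_reg_r r); [lra|]; unfold Rdiv; rewrite Rmult_assoc, Rinv_l; lra).
  assert (Hdel : delta n k alpha beta = acos (c / r)).
  { unfold delta. destruct (excluded_middle_informative _) as [_|F]; [reflexivity|].
    exfalso; apply F; split; [exact Hba|]. fold c r. rewrite Rabs_pos_eq; lra. }
  assert (Hcos : cos (delta n k alpha beta) = c / r)
    by (rewrite Hdel; apply cos_acos; lra).
  assert (Hsin : 0 < sin (delta n k alpha beta)).
  { rewrite Hdel, sin_acos by lra. apply sqrt_lt_R0. unfold Rsqr. nra. }
  assert (Hrc : r * cos (delta n k alpha beta) = c) by (rewrite Hcos; field; lra).
  pose proof (sin2_cos2 (delta n k alpha beta)) as Hsc. unfold Rsqr in Hsc.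
  set (d := delta n k alpha beta) in *.
  set (co := cos d) in *. set (si := sin d) in *.
  split.
  - intro mu. split.
    + intros [[_ HB]|HE]; [left; exact HB| right; exact HE].
    + intros [HB|HE]; [|right; exact HE].
      destruct (classic (tDk n k alpha beta mu)) as [HD|HND]; [left; split; assumption|].
      right. split; [exact HND|].
      destruct mu as [x y]. unfold Ball in HB.
      assert (Hm2 : x ^ 2 + y ^ 2 <= c ^ 2).
      { unfold Cmod in HB. simpl in HB.
        replace ((x + - 0) * ((x + - 0) * 1) + (y + - 0) * ((y + - 0) * 1))
          with (x ^ 2 + y ^ 2) in HB by ring.
        pose proof (sqrt_pos (x ^ 2 + y ^ 2)).
        pose proof (sqrt_sqrt (x ^ 2 + y ^ 2)).
        assert (0 <= x ^ 2 + y ^ 2) by nra. nra. }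
      assert (HCS1 : x * co + y * si <= c).
      { assert (Ei : (x * co + y * si) ^ 2 + (x * si - y * co) ^ 2 = (x ^ 2 + y ^ 2) * (si * si + co * co)) by ring.
        rewrite Hsc in Ei.
        pose proof (pow2_ge_0 (x * si - y * co)). pose proof (pow2_ge_0 (x * si + y * co)).
        assert (Hs2 : (x * co + y * si) ^ 2 <= c ^ 2) by nra. nra. }
      assert (HCS2 : x * co - y * si <= c).
      { assert (Ei : (x * co - y * si) ^ 2 + (x * si + y * co) ^ 2 = (x ^ 2 + y ^ 2) * (si * si + co * co)) by ring.
        rewrite Hsc in Ei.
        pose proof (pow2_ge_0 (x * si - y * co)). pose proof (pow2_ge_0 (x * si + y * co)).
        assert (Hs2 : (x * co - y * si) ^ 2 <= c ^ 2) by nra. nra. }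
      assert (Hco : 0 < co) by (rewrite Hcos; lra).
      split.
      * unfold Rregion; simpl; fold d co si r.
        assert (Hx : x <= c) by nra.
        split; [lra|]. split.
        -- apply Rmult_le_reg_r with si; [lra|].
           unfold Rdiv. rewrite !Rmult_assoc, Rinv_l by lra. nra.
        -- apply Rmult_le_reg_r with si; [lra|].
           unfold Rdiv. rewrite !Rmult_assoc, Rinv_l by lra. nra.
      * unfold Xset. destruct (Nat.leb k m) eqn:E; [exact I|].
        apply Nat.leb_gt in E. unfold Ball.
        apply Rle_trans with c; [exact HB|]. unfold c.
        left. apply cos_decreasing_1.
        -- unfold psi. pose proof PI_RGT_0.
           assert (INR m < INR k) by (apply lt_INR; lia).
           assert (0 < INR (n+1)) by (apply lt_0_INR; lia).
           apply Rmult_le_pos; [nra|]. left; apply Rinv_0_lt_compat; lra.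
        -- unfold psi. pose proof PI_RGT_0.
           assert (0 <= INR m) by apply pos_INR.
           unfold phi in Hp1. unfold Rdiv in *.
           assert (0 < INR (n+1)) by (apply lt_0_INR; lia).
           assert (0 < / INR (n+1)) by (apply Rinv_0_lt_compat; lra).
           assert (0 <= INR m * PI * / INR (n+1)) by
             (apply Rmult_le_pos; [apply Rmult_le_pos|]; lra).
           assert (0 < PI * / INR (n+1)) by (apply Rmult_lt_0_compat; lra).
           nra.
        -- lra.
        -- lra.
        -- unfold psi, phi. pose proof PI_RGT_0.
           assert (1 <= INR m) by (apply (le_INR 1); lia).
           unfold Rdiv.
           assert (0 < INR (n+1)) by (apply lt_0_INR; lia).
           assert (0 < / INR (n+1)) by (apply Rinv_0_lt_compat; lra).
           assert (0 <= INR m * PI * / INR (n+1)) by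
             (apply Rmult_le_pos; [apply Rmult_le_pos|]; lra).
           assert (0 < PI * / INR (n+1)) by (apply Rmult_lt_0_compat; lra).
           nra.
  - simpl. fold c r d co si. rewrite Hrc. split.
    + exists (c * co, (c * si)). split.
      { split.
        - transitivity (c * (si * si + co * co)); [unfold Re, Im; simpl; ring| rewrite Hsc; ring].
        - transitivity (c ^ 2 * (si * si + co * co)); [unfold Re, Im; simpl; ring| rewrite Hsc; ring]. }
      intros [x y] [H1 H2]. change (Re (x, y)) with x in H1, H2. change (Im (x, y)) with y in H1, H2.
      assert (E : (x - c * co) ^ 2 + (y - c * si) ^ 2 =
        (x ^ 2 + y ^ 2) - 2 * c * (x * co + y * si) + c ^ 2 * (si * si + co * co)) by ring.
      assert (H2x : x ^ 2 + y ^ 2 = c ^ 2) by (simpl; lra).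
      rewrite Hsc, H1, H2x in E.
      assert (E' : (x - c * co) ^ 2 + (y - c * si) ^ 2 = 0) by (rewrite E; ring).
      pose proof (pow2_ge_0 (x - c * co)). pose proof (pow2_ge_0 (y - c * si)).
      assert ((x - c * co) ^ 2 = 0) by lra. assert ((y - c * si) ^ 2 = 0) by lra.
      assert (x = c * co) by nra. assert (y = (c * si)) by nra. subst; reflexivity.
    + exists (c * co, - (c * si)). split.
      { split.
        - transitivity (c * (si * si + co * co)); [unfold Re, Im; simpl; ring| rewrite Hsc; ring].
        - transitivity (c ^ 2 * (si * si + co * co)); [unfold Re, Im; simpl; ring| rewrite Hsc; ring]. }
      intros [x y] [H1 H2]. change (Re (x, y)) with x in H1, H2. change (Im (x, y)) with y in H1, H2.
      assert (E : (x - c * co) ^ 2 + (y + c * si) ^ 2 =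
        (x ^ 2 + y ^ 2) - 2 * c * (x * co - y * si) + c ^ 2 * (si * si + co * co)) by ring.
      assert (H2x : x ^ 2 + y ^ 2 = c ^ 2) by (simpl; lra).
      rewrite Hsc, H1, H2x in E.
      assert (E' : (x - c * co) ^ 2 + (y + c * si) ^ 2 = 0) by (rewrite E; ring).
      pose proof (pow2_ge_0 (x - c * co)). pose proof (pow2_ge_0 (y + c * si)).
      assert ((x - c * co) ^ 2 = 0) by lra. assert ((y + c * si) ^ 2 = 0) by lra.
      assert (x = c * co) by nra. assert (y = - (c * si)) by nra. subst; reflexivity.
Qed.
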